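(* Let $V$ be a finite-dimensional normed mixed lattice space (i.e. its topology is given by a mixed lattice norm). If the cone $V_{sp}$ is generating ($V=V_{sp}-V_{sp}$), then $(V,\preccurlyeq)$ is a lattice.
   Context: A mixed lattice vector space $(V,\le,\preccurlyeq)$ is a real vector space $V$ with two partial orderings $\le$ (initial order) and $\preccurlyeq$ (specific order), each making $V$ a partially ordered vector space, with positive cones $V_p=\{x:0\le x\}$, $V_{sp}=\{x:0\preccurlyeq x\}$, such that: (1) for all $x,y$ the elements $x\curlyvee y=\min\{w: w\succcurlyeq x,\ w\ge y\}$ and $x\curlywedge y=\max\{w: w\preccurlyeq x,\ w\le y\}$ exist (min/max with respect to $\le$); (2) $x\preccurlyeq y$ implies $x\le y$; (3) $x\curlyvee y, x\curlywedge y\in V_{sp}$ whenever $x,y\in V_{sp}$. Notation: $x^u=0\curlyvee x$, $x^l=0\curlyvee(-x)$, $s(x)=x^u+x^l$. A norm $\rho$ on $V$ is a mixed lattice norm if $s(x)\le s(y)$ implies $\rho(x)\le\rho(y)$. *)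

(* Defs.v *)
From HB Require Import structures.
From mathcomp Require Import all_boot all_order all_algebra.
From mathcomp Require Import reals.
Set Implicit Arguments. Unset Strict Implicit. Unset Printing Implicit Defensive.
Import Order.TTheory GRing.Theory Num.Theory.
Local Open Scope ring_scope.

Section MixedLattice.
Variables (R : realType) (V : lmodType R).

Definition povs (le : V -> V -> Prop) : Prop :=
  [/\ (forall x, le x x),
      (forall x y, le x y -> le y x -> x = y),
      (forall x y z, le x y -> le y z -> le x z),
      (forall x y z, le x y -> le (x + z) (y + z)) &
      (forall (a : R) x y, 0 <= a -> le x y -> le (a *: x) (a *: y))].

(* w = x ⋎ y : the <=-least w with x ≼ w and y <= w *)
Definition is_mixed_upper (le sle : V -> V -> Prop) (x y w : V) : Prop :=
  [/\ sle x w, le y w & forall w', sle x w' -> le y w' -> le w w'].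

(* w = x ⋏ y : the <=-greatest w with w ≼ x and w <= y *)
Definition is_mixed_lower (le sle : V -> V -> Prop) (x y w : V) : Prop :=
  [/\ sle w x, le w y & forall w', sle w' x -> le w' y -> le w' w].

Definition mixed_lattice_space (le sle : V -> V -> Prop) : Prop :=
  povs le /\ povs sle /\
  (forall x y, exists w, is_mixed_upper le sle x y w) /\
  (forall x y, exists w, is_mixed_lower le sle x y w) /\
  (forall x y, sle x y -> le x y) /\
  (forall x y, sle 0 x -> sle 0 y ->
     (forall w, is_mixed_upper le sle x y w -> sle 0 w) /\
     (forall w, is_mixed_lower le sle x y w -> sle 0 w)).

Definition s_of (le sle : V -> V -> Prop) (x s : V) : Prop :=
  exists u l, is_mixed_upper le sle 0 x u /\ is_mixed_upper le sle 0 (- x) l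
              /\ s = u + l.

Definition is_norm (rho : V -> R) : Prop :=
  [/\ (forall x, rho x = 0 -> x = 0),
      (forall (a : R) x, rho (a *: x) = `|a| * rho x) &
      (forall x y, rho (x + y) <= rho x + rho y)].

Definition mixed_lattice_norm (le sle : V -> V -> Prop) (rho : V -> R) : Prop :=
  is_norm rho /\
  forall x y sx sy, s_of le sle x sx -> s_of le sle y sy -> le sx sy -> rho x <= rho y.

Definition generating_cone (sle : V -> V -> Prop) : Prop :=
  forall v, exists a b, sle 0 a /\ sle 0 b /\ v = a - b.

Definition is_sup (ord : V -> V -> Prop) (x y w : V) : Prop :=
  [/\ ord x w, ord y w & forall w', ord x w' -> ord y w' -> ord w w'].

Definition is_inf (ord : V -> V -> Prop) (x y w : V) : Prop :=
  [/\ ord w x, ord w y & forall w', ord w' x -> ord w' y -> ord w' w].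

Definition is_lattice (ord : V -> V -> Prop) : Prop :=
  forall x y, (exists w, is_sup ord x y w) /\ (exists w, is_inf ord x y w).

End MixedLattice.

(* Main.v *)
Require Import Defs.
From HB Require Import structures.
From mathcomp Require Import all_boot all_order all_algebra.
From mathcomp Require Import all_classical all_reals all_analysis.
From mathcomp Require Import lra.
Import Order.TTheory GRing.Theory Num.Theory.
Import numFieldNormedType.Exports.
Set Implicit Arguments. Unset Strict Implicit.
Local Open Scope classical_set_scope.
Local Open Scope ring_scope.

Section Povs.
Variables (R : realType) (V : lmodType R) (ord : V -> V -> Prop).
Hypothesis P : povs ord.

Lemma po_refl x : ord x x. Proof. by case: P. Qed.
Lemma po_anti x y : ord x y -> ord y x -> x = y. Proof. by case: P => _ h *; apply: h. Qed.
Lemma po_trans x y z : ord x y -> ord y z -> ord x z. Proof. by case: P => _ _ h *; apply: h; eauto. Qed.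
Lemma po_addr x y z : ord x y -> ord (x + z) (y + z). Proof. by case: P => _ _ _ h *; apply: h. Qed.
Lemma po_sub x y : ord x y <-> ord 0 (y - x).
Proof.
split=> h; first by have := po_addr (- x) h; rewrite subrr.
by have := po_addr x h; rewrite add0r subrK.
Qed.
Lemma po_add a b c d : ord a b -> ord c d -> ord (a + c) (b + d).
Proof.
move=> h1 h2; apply: (po_trans (po_addr c h1)).
by rewrite ![b + _]addrC; apply: po_addr.
Qed.
Lemma po_opp x y : ord x y -> ord (- y) (- x).
Proof. move=> h; have := po_addr (- x - y) h. by rewrite addrA subrr add0r addrCA subrr addr0. Qed.
End Povs.

Section ML.
Variables (R : realType) (V : lmodType R) (le sle : V -> V -> Prop) (rho : V -> R).
Hypothesis Hml : mixed_lattice_space le sle.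
Hypothesis Hn : mixed_lattice_norm le sle rho.

Lemma Hle : povs le. Proof. by case: Hml. Qed.
Lemma Hsle : povs sle. Proof. by case: Hml => _ []. Qed.
Lemma upE x y : exists w, is_mixed_upper le sle x y w.
Proof. by case: Hml => _ [_ []]. Qed.
Lemma loE x y : exists w, is_mixed_lower le sle x y w.
Proof. by case: Hml => _ [_ [_ []]]. Qed.
Lemma sle_le x y : sle x y -> le x y.
Proof. by case: Hml => _ [_ [_ [_ []]]] h _; apply: h. Qed.
Lemma lo_pos x y w : sle 0 x -> sle 0 y -> is_mixed_lower le sle x y w -> sle 0 w.
Proof. by case: Hml => _ [_ [_ [_ [_ h]]]] hx hy; case: (h _ _ hx hy) => _; apply. Qed.

Lemma mu_uniq x y w1 w2 : is_mixed_upper le sle x y w1 -> is_mixed_upper le sle x y w2 -> w1 = w2.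
Proof.
case=> a b c [d e f]; apply: (po_anti Hle); [exact: c | exact: f].
Qed.

Lemma mu_S1 w : sle 0 w -> is_mixed_upper le sle 0 w w.
Proof. by move=> h; split=> //; exact: (po_refl Hle). Qed.

Lemma mu_S2 y : le 0 y -> is_mixed_upper le sle 0 (- y) 0.
Proof.
move=> h; split; first exact: (po_refl Hsle).
  by have := po_opp Hle h; rewrite oppr0.
by move=> w' /sle_le.
Qed.

Lemma mu_pos z u : is_mixed_upper le sle 0 z u -> sle 0 u.
Proof. by case. Qed.

Lemma s_pos w : sle 0 w -> s_of le sle w w.
Proof.
move=> h; exists w, 0; split; first exact: mu_S1.
by split; [apply: mu_S2; apply: sle_le | rewrite addr0].
Qed.

Lemma Hnorm : is_norm rho. Proof. by case: Hn. Qed.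
Lemma rhoZ a x : rho (a *: x) = `|a| * rho x. Proof. by case: Hnorm => _ h _. Qed.
Lemma rhoD x y : rho (x + y) <= rho x + rho y. Proof. by case: Hnorm. Qed.
Lemma rho_eq0 x : rho x = 0 -> x = 0. Proof. by case: Hnorm => h _ _; apply: h. Qed.
Lemma rho0 : rho 0 = 0.
Proof. by have := rhoZ 0 0; rewrite scale0r normr0 mul0r. Qed.
Lemma rhoN x : rho (- x) = rho x.
Proof. by rewrite -scaleN1r rhoZ normrN normr1 mul1r. Qed.
Lemma rho_ge0 x : 0 <= rho x.
Proof.
have := rhoD x (- x); rewrite subrr rho0 rhoN => h.
by rewrite -(@pmulr_rge0 _ 2) // mulr2n mulrDl !mul1r.
Qed.

Lemma rho_mono a b : sle 0 a -> sle 0 b -> le a b -> rho a <= rho b.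
Proof. by move=> ha hb hab; case: Hn => _ h; apply: (h _ _ _ _ (s_pos ha) (s_pos hb)). Qed.

Lemma rho_up z u : is_mixed_upper le sle 0 z u -> rho u <= rho z.
Proof.
move=> hu; have [l hl] := upE 0 (- z).
case: Hn => _ h; apply: (h _ _ u (u + l) (s_pos (mu_pos hu))).
  by exists u, l.
have := po_addr Hle u (sle_le (mu_pos hl)); rewrite add0r addrC; exact.
Qed.

Lemma rho_up_ge y u : le 0 y -> is_mixed_upper le sle 0 y u -> rho y <= rho u.
Proof.
move=> hy hu; case: Hn => _ h; apply: (h _ _ (u + 0) u _ (s_pos (mu_pos hu))).
  by exists u, 0; split=> //; split=> //; apply: mu_S2.
rewrite addr0; exact: (po_refl Hle).
Qed.

Lemma up_sub a b p q t : is_mixed_upper le sle 0 a p -> is_mixed_upper le sle 0 b q ->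
  is_mixed_upper le sle 0 (a - b) t -> le p (q + t).
Proof.
case=> _ _ hp [hq1 hq2 _] [ht1 ht2 _]; apply: hp.
  by apply: (po_trans Hsle hq1); have := po_addr Hsle q ht1; rewrite add0r addrC.
by have := po_add Hle hq2 ht2; rewrite addrC subrK.
Qed.

Lemma up_mono y m p q : is_mixed_upper le sle 0 y p -> is_mixed_upper le sle 0 m q ->
  le y m -> le p q.
Proof. case=> _ _ hp [hq1 hq2 _] hym; apply: hp => //; exact: (po_trans Hle hym hq2). Qed.

Lemma small_eq0 x : (forall e, 0 < e -> rho x < e) -> x = 0.
Proof.
move=> h; apply: rho_eq0; apply/eqP; rewrite eq_le rho_ge0 andbT.
apply/negPn/negP; rewrite -ltNge => hx.
by have := h _ hx; rewrite ltxx.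
Qed.

Lemma sp_closed v : (forall e, 0 < e -> exists c, sle 0 c /\ rho (c - v) < e) -> sle 0 v.
Proof.
move=> hc; have [p hp] := upE 0 v.
suff : p - v = 0 by move/eqP; rewrite subr_eq0 => /eqP <-; exact: mu_pos hp.
apply: small_eq0 => e e0.
have [c [c0 hce]] := hc (e / 2) (divr_gt0 e0 (ltr0Sn _ 1)).
have [t' ht'] := upE 0 (v - c).
have h1 := up_sub hp (mu_S1 c0) ht'.
have hpv : le 0 (p - v) by case: hp => _ hvp _; move: hvp => /(po_sub Hle).
have hm : le (p - v) ((c - v) + t').
  by have := po_addr Hle (- v) h1; rewrite addrAC.
have [ut hut] := upE 0 (p - v); have [um hum] := upE 0 ((c - v) + t').
apply: (le_lt_trans (rho_up_ge hpv hut)).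
apply: (le_lt_trans (rho_mono (mu_pos hut) (mu_pos hum) (up_mono hut hum hm))).
apply: (le_lt_trans (rho_up hum)).
apply: (le_lt_trans (rhoD _ _)).
have := rho_up ht'; rewrite -opprB rhoN => h2.
apply: (le_lt_trans (lerD (lexx _) h2)).
by rewrite -mulr2n -mulr_natr -ltr_pdivlMr.
Qed.

Lemma p_closed y : (forall e, 0 < e -> exists c, le 0 c /\ rho (c - y) < e) -> le 0 y.
Proof.
move=> hc; have [l hl] := upE 0 (- y).
suff l0 : l = 0.
  by case: hl => _ h _; move: h; rewrite l0 => /(po_opp Hle); rewrite oppr0 opprK.
apply: small_eq0 => e e0.
have [c [c0 hce]] := hc e e0.
have [t' ht'] := upE 0 (- y - - c).
have h1 := up_sub hl (mu_S2 c0) ht'; rewrite add0r in h1.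
apply: (le_lt_trans (rho_mono (mu_pos hl) (mu_pos ht') h1)).
apply: (le_lt_trans (rho_up ht')).
by rewrite opprK addrC.
Qed.

End ML.

Section ML2.
Variables (R : realType) (V : lmodType R) (le sle : V -> V -> Prop).
Hypothesis Hml : mixed_lattice_space le sle.

Let Hle := Hle Hml.
Let Hsle := Hsle Hml.

Lemma ml_tr x y w z : is_mixed_lower le sle x y w ->
  is_mixed_lower le sle (x + z) (y + z) (w + z).
Proof.
case=> h1 h2 h3; split; [exact: (po_addr Hsle) | exact: (po_addr Hle) |] => w' h4 h5.
rewrite -(subrK z w'); apply: (po_addr Hle); apply: h3.
  by have := po_addr Hsle (- z) h4; rewrite addrK.
by have := po_addr Hle (- z) h5; rewrite addrK.
Qed.

Lemma least_sp x u : sle 0 u -> sle x u ->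
  (forall w, sle 0 w -> sle x w -> le u w) ->
  forall w, sle 0 w -> sle x w -> sle u w.
Proof.
move=> hu hxu hmin w hw hxw.
have [m hm] := loE Hml w u.
have m0 := lo_pos Hml hw hu hm.
have mx : sle x m.
  have hm' := ml_tr (- x) hm.
  have := lo_pos Hml _ _ hm'.
  move: hxw hxu => /(po_sub Hsle) a /(po_sub Hsle) b /(_ a b) h.
  by apply/(po_sub Hsle).
have um := hmin m m0 mx.
case: hm => hmw hmu _.
by rewrite (po_anti Hle um hmu).
Qed.

Lemma sup0_ex x : (exists u, [/\ sle 0 u, sle x u & forall w, sle 0 w -> sle x w -> le u w]) ->
  exists u, [/\ sle 0 u, sle x u & forall w, sle 0 w -> sle x w -> sle u w].
Proof.
by case=> u [h1 h2 h3]; exists u; split=> //; exact: least_sp.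
Qed.

Lemma lattice_of_sup0 :
  (forall x, exists u, [/\ sle 0 u, sle x u & forall w, sle 0 w -> sle x w -> sle u w]) ->
  is_lattice sle.
Proof.
move=> hs x y; have [u [u0 xu umin]] := hs (x - y).
have hsup : is_sup sle x y (y + u).
  split.
  - by have := po_addr Hsle y xu; rewrite subrK addrC.
  - by have := po_addr Hsle y u0; rewrite add0r addrC.
  - move=> w' h1 h2.
    have a : sle 0 (w' - y) by move: h2 => /(po_sub Hsle).
    have b : sle (x - y) (w' - y) := po_addr Hsle (-y) h1.
    by have := po_addr Hsle y (umin _ a b); rewrite !subrK addrC.
set s := y + u in hsup *.
case: hsup => hxs hys hmin.
split; first by exists s.
exists (x + (y - s)); split.
- by have := po_addr Hsle (x - s) hys; rewrite [s + _]addrC subrK addrCA.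
- by have := po_addr Hsle (y - s) hxs; rewrite [s + _]addrC subrK.
- move=> w' h1 h2.
  have c1 : sle x (x + (y - w')).
    have := po_addr Hsle x (iffLR (po_sub Hsle _ _) h2).
    by rewrite add0r addrC.
  have c2 : sle y (x + (y - w')).
    have := po_addr Hsle y (iffLR (po_sub Hsle _ _) h1).
    by rewrite add0r addrC addrCA.
  have := hmin _ c1 c2 => /(po_sub Hsle) h.
  apply/(po_sub Hsle).
  suff -> : x + (y - s) - w' = x + (y - w') - s by [].
  by rewrite -!addrA [- s + _]addrC.
Qed.
End ML2.

Section Top.
Variables (R : realType) (V : vectType R) (rho : V -> R).
Hypothesis Hnorm : is_norm rho.

Lemma nZ a x : rho (a *: x) = `|a| * rho x. Proof. by case: Hnorm => _ h _. Qed.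
Lemma nD x y : rho (x + y) <= rho x + rho y. Proof. by case: Hnorm. Qed.
Lemma n_eq0 x : rho x = 0 -> x = 0. Proof. by case: Hnorm => h _ _; apply: h. Qed.
Lemma n0 : rho 0 = 0.
Proof. by have := nZ 0 0; rewrite scale0r normr0 mul0r. Qed.
Lemma nN x : rho (- x) = rho x.
Proof. by rewrite -scaleN1r nZ normrN normr1 mul1r. Qed.
Lemma n_ge0 x : 0 <= rho x.
Proof.
have := nD x (- x); rewrite subrr n0 nN => h.
by rewrite -(@pmulr_rge0 _ 2) // mulr2n mulrDl !mul1r.
Qed.
Lemma n_sum (I : finType) (F : I -> V) : rho (\sum_i F i) <= \sum_i rho (F i).
Proof.
apply: (big_ind2 (fun a b => rho a <= b)); [by rewrite n0| |by []].
by move=> a1 b1 a2 b2 h1 h2; apply: (le_trans (nD _ _)); apply: lerD.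
Qed.

Local Notation n := (\dim {:V}).
Local Notation e := (vbasis {:V}).
Definition phi (r : 'rV[R]_n) : V := passmx.vecof e r.

Lemma phiB r s : phi (r - s) = phi r - phi s.
Proof.
rewrite /phi /passmx.vecof -sumrB; apply: eq_bigr => i _.
by rewrite !mxE scalerBl.
Qed.
Lemma phiZ a r : phi (a *: r) = a *: phi r.
Proof.
rewrite /phi /passmx.vecof scaler_sumr; apply: eq_bigr => i _.
by rewrite !mxE scalerA.
Qed.
Lemma phi_eq0 r : phi r = 0 -> r = 0.
Proof. by move/eqP; rewrite /phi passmx.vecof_eq0 ?vbasisP // => /eqP. Qed.
Lemma phiK v : phi (passmx.rVof e v) = v.
Proof. by rewrite /phi passmx.rVofK // vbasisP. Qed.

Lemma entry_le (r : 'rV[R]_n) i : `|r 0 i| <= `|r|.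
Proof.
rewrite (_ : `|r| = mx_norm r) // mx_normrE; apply/bigmax_geP; right => /=.
by exists (0, i).
Qed.

Lemma easy_bound : exists C, 0 <= C /\ forall r, rho (phi r) <= C * `|r|.
Proof.
exists (\sum_(i < n) rho e`_i); split; first by apply: sumr_ge0 => i _; apply: n_ge0.
move=> r; rewrite /phi /passmx.vecof mulrC mulr_sumr.
apply: (le_trans (n_sum _)); apply: ler_sum => i _.
rewrite nZ; apply: ler_wpM2r; first exact: n_ge0.
exact: entry_le.
Qed.

Lemma n_dist x y : `|rho x - rho y| <= rho (x - y).
Proof.
have h1 : rho x <= rho y + rho (x - y).
  by have := nD y (x - y); rewrite addrC subrK.
have h2 : rho y <= rho x + rho (x - y).
  by have := nD x (y - x); rewrite addrC subrK -opprB nN.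
rewrite ler_norml; apply/andP; split; lra.
Qed.

Lemma g_cont : continuous (fun r => rho (phi r)).
Proof.
have [C [C0 hC]] := easy_bound.
have C1 : 0 < C + 1 by apply: ltr_wpDl C0 ltr01.
move=> r; apply/(@cvgrPdist_lt _ _ _ (nbhs r) (nbhs_filter r)) => eps eps0.
apply/nbhs_ballP; exists (eps / (C + 1)); first by rewrite /= divr_gt0.
move=> t /=; rewrite -ball_normE /= => hrt.
apply: (le_lt_trans (n_dist _ _)); rewrite -phiB.
apply: (le_lt_trans (hC _)).
apply: (le_lt_trans (ler_wpM2l C0 (ltW hrt))).
rewrite -ltr_pdivlMr // ?divr_gt0 // invf_div mulrCA mulfV ?gt_eqF // mulr1 ltrDl ltr01 //.
Qed.

Lemma hard_bound : exists M, forall r, `|r| <= M * rho (phi r).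
Proof.
set S := [set r : 'rV[R]_n | `|r| = 1].
have Sr : forall r, r != 0 -> S (`|r|^-1 *: r).
  move=> r r0; rewrite /S /= normrZ normfV normr_id mulVf //.
  by rewrite normr_eq0.
case: (pselect (S !=set0)) => [S0|S0]; last first.
  exists 0 => r; rewrite mul0r.
  have [->|r0] := eqVneq r 0; first by rewrite normr0.
  by exfalso; apply: S0; exists (`|r|^-1 *: r); apply: Sr.
have cS : compact S.
  apply: bounded_closed_compact.
    exists 1; split => // M M1 x Sx; rewrite /= Sx ltW //.
  have : closed ((fun x : 'rV[R]_n => `|x|) @^-1` [set x : R | x = 1]).
    apply: preimage_closed; last exact: closed_eq.
    by move=> y _; apply: norm_continuous.
  by [].
have [c cS' hmin] := EVT_min_rV S0 cS (continuous_subspaceT g_cont).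
have Sc : S c by move: cS'; rewrite inE.
have c0 : c != 0 by apply/eqP => c0; move: Sc; rewrite /S /= c0 normr0 => /eqP; rewrite eq_sym oner_eq0.
have m0 : 0 < rho (phi c).
  rewrite lt_def n_ge0 andbT; apply/eqP => /n_eq0 /phi_eq0 /eqP; exact/negP.
exists (rho (phi c))^-1 => r.
have [->|r0] := eqVneq r 0; first by rewrite normr0 mulr_ge0 ?invr_ge0 ?n_ge0 // ltW.
have := hmin _ (mem_set (Sr _ r0)); rewrite phiZ nZ normfV normr_id => h.
have r0' : 0 < `|r| by rewrite normr_gt0.
rewrite mulrC ler_pdivlMr //; move: h; rewrite ler_pdivlMl //.
Qed.
End Top.

Section Main.
Variables (R : realType) (V : vectType R) (le sle : V -> V -> Prop) (rho : V -> R).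
Hypothesis Hml : mixed_lattice_space le sle.
Hypothesis Hn : mixed_lattice_norm le sle rho.
Let Hle := Hle Hml.
Let Hsle := Hsle Hml.
Let Hnorm := Hnorm Hn.
Local Notation phi := (@phi R V).

Definition rclosed (Q : V -> Prop) :=
  forall w, (forall e, 0 < e -> exists w', Q w' /\ rho (w' - w) < e) -> Q w.

Lemma closed_pre Q : rclosed Q -> closed [set r | Q (phi r)].
Proof.
have [C [C0 hC]] := easy_bound Hnorm.
have C1 : 0 < C + 1 by apply: ltr_wpDl C0 ltr01.
move=> hQ r hr; apply: hQ => eps eps0.
have [|s [Qs brs]] := hr (ball r (eps / (C + 1))).
  by apply: nbhsx_ballx; rewrite divr_gt0.
exists (phi s); split => //.
move: brs; rewrite -ball_normE /= => brs.
rewrite -phiB; apply: (le_lt_trans (hC _)); rewrite distrC.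
apply: (le_lt_trans (ler_wpM2l C0 (ltW brs))).
by rewrite -ltr_pdivlMr // ?divr_gt0 // invf_div mulrCA mulfV ?gt_eqF // mulr1 ltrDl ltr01.
Qed.

Lemma rc_sp : rclosed (sle 0).
Proof. move=> w h; apply: (sp_closed Hml Hn) => e e0; have [w' [? ?]] := h e e0; by exists w'. Qed.

Lemma rc_spx x : rclosed (sle x).
Proof.
move=> w h; apply/(po_sub Hsle); apply: rc_sp => e e0.
have [w' [h1 h2]] := h e e0; exists (w' - x); split.
  by move: h1 => /(po_sub Hsle).
by rewrite opprB addrA subrK.
Qed.

Lemma rc_le v : rclosed (fun w => le w v).
Proof.
move=> w h; apply/(po_sub Hle); apply: (p_closed Hml Hn) => e e0.
have [w' [h1 h2]] := h e e0; exists (v - w'); split.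
  by move: h1 => /(po_sub Hle).
by rewrite opprB addrC addrA subrK -opprB (rhoN Hn).
Qed.

Lemma rc_and (P Q : V -> Prop) : rclosed P -> rclosed Q -> rclosed (fun w => P w /\ Q w).
Proof.
move=> hP hQ w h; split.
  by apply: hP => e e0; have [w' [[? ?] ?]] := h e e0; exists w'.
by apply: hQ => e e0; have [w' [[? ?] ?]] := h e e0; exists w'.
Qed.

Lemma lo_U x v w m : sle 0 v -> sle x v -> sle 0 w -> sle x w ->
  is_mixed_lower le sle v w m -> sle 0 m /\ sle x m.
Proof.
move=> v0 vx w0 wx hm; have m0 := lo_pos Hml v0 w0 hm; split => //.
have hm' := ml_tr Hml (- x) hm.
have := lo_pos Hml _ _ hm'.
move: vx wx => /(po_sub Hsle) a /(po_sub Hsle) b /(_ a b) h.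
by apply/(po_sub Hsle).
Qed.

Lemma directed x a (s : seq V) : sle 0 a -> sle x a ->
  (forall v, v \in s -> sle 0 v /\ sle x v) ->
  exists w, [/\ sle 0 w, sle x w, le w a & forall v, v \in s -> le w v].
Proof.
move=> a0 ax; elim: s => [|v s IH] hs.
  by exists a; split => //; exact: (po_refl Hle).
have [|w [w0 wx wa ws]] := IH.
  by move=> v0 hv0; apply: hs; rewrite in_cons hv0 orbT.
have [v0 vx] := hs v (mem_head _ _).
have [m hm] := loE Hml v w.
have [m0 mx] := lo_U v0 vx w0 wx hm.
case: (hm) => mv mw _.
exists m; split => //; first exact: (po_trans Hle mw).
move=> v1; rewrite in_cons => /orP [/eqP ->|hv1]; first exact: (sle_le Hml mv).
exact: (po_trans Hle mw (ws _ hv1)).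
Qed.


Lemma exists_least x a : sle 0 a -> sle x a ->
  exists u, [/\ sle 0 u, sle x u & forall w, sle 0 w -> sle x w -> le u w].
Proof.
move=> a0 ax.
pose Q w := sle 0 w /\ sle x w /\ le w a.
pose K := [set r | Q (phi r)].
have cK : compact K.
  apply: bounded_closed_compact; last first.
    by apply: closed_pre; apply: rc_and; [exact: rc_sp | apply: rc_and; [exact: rc_spx | exact: rc_le]].
  have [M hM] := hard_bound Hnorm.
  exists (`|M| * rho a); split; first exact: num_real.
  move=> y hy r [r0 [rx ra]]; rewrite /= ltW //; apply: le_lt_trans hy.
  apply: (le_trans (hM r)); apply: (le_trans (ler_norm _)); rewrite normrM.
  apply: ler_wpM2l => //.
  rewrite ger0_norm ?(rho_ge0 Hn) //; exact: (rho_mono Hml Hn r0 a0 ra).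
pose D := [set v : V | sle 0 v /\ sle x v].
pose f v := K `&` [set r | le (phi r) v].
move: cK; rewrite compact_In0 => /(_ V D f) [].
- exists (fun v => [set r | le (phi r) v]) => // v _.
  exact: (closed_pre (@rc_le v)).
- move=> D' sD'.
  have [|w [w0 wx wa ws]] := @directed x a (finmap.enum_fset D') a0 ax.
    by move=> v hv; move: (sD' v hv); rewrite inE.
  exists (passmx.rVof (vbasis {:V}) w) => v hv; rewrite /f /K /Q /= !phiK.
  by split; [split => // | apply: ws].
- move=> r hr.
  have [Kr _] : f a r by apply: hr; split.
  case: Kr => r0 [rx _].
  exists (phi r); split => // w w0 wx.
  by have [_ ] := hr w (conj w0 wx).
Qed.
End Main.

Theorem theorem4p11 (R : realType) (V : vectType R)
    (le sle : V -> V -> Prop) (rho : V -> R) :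
  mixed_lattice_space le sle ->
  mixed_lattice_norm le sle rho ->
  generating_cone sle ->
  is_lattice sle.
Proof.
move=> Hml Hn Hg; apply: (lattice_of_sup0 Hml) => x.
apply: (sup0_ex Hml).
have [p [q [p0 [q0 ->]]]] := Hg x.
apply: (exists_least Hml Hn p0).
apply/(po_sub (Hsle Hml)).
by rewrite opprB addrC subrK.
Qed.
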